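(* Let $p\colon\mathbb{R}^n\to\mathbb{R}$ be a CPWL function and let $\{\mathcal{X}_i\}_{i\in[m]}$ be a family of closed connected subsets of $\mathbb{R}^n$ with $\bigcup_{i\in[m]}\mathcal{X}_i=\mathbb{R}^n$ and $p$ affine on each $\mathcal{X}_i$, such that $m$ is the minimum number of members among all such families of closed connected subsets. Let $\{\mathcal{H}_j\}_{j\in[k]}$ be any finite family of affine subspaces of $\mathbb{R}^n$ of dimension $n-1$. Then for every $i\in[m]$, $$\mathcal{X}_i\cap\left(\mathbb{R}^n\setminus\bigcup_{j\in[k]}\mathcal{H}_j\right)\neq\emptyset.$$
   Context: A function $p\colon\mathbb{R}^n\to\mathbb{R}$ is CPWL if there are finitely many closed subsets $\mathcal{U}_1,\dots,\mathcal{U}_m$ of $\mathbb{R}^n$ with $\mathbb{R}^n=\bigcup_i\mathcal{U}_i$ and $p$ affine on each $\mathcal{U}_i$. *)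

(* Defs.v *)
From HB Require Import structures.
From mathcomp Require Import all_boot all_order all_algebra.
From mathcomp Require Import all_classical all_reals all_analysis.
Set Implicit Arguments. Unset Strict Implicit. Unset Printing Implicit Defensive.
Import Order.TTheory GRing.Theory Num.Theory.
Import numFieldNormedType.Exports.
Local Open Scope ring_scope.
Local Open Scope classical_set_scope.

Definition affine_on (R : realType) (n : nat) (p : 'rV[R]_n -> R)
  (U : set 'rV[R]_n) : Prop :=
  exists (a : 'rV[R]_n) (b : R),
    forall x, U x -> p x = \sum_(i < n) a ord0 i * x ord0 i + b.

Definition CPWL (R : realType) (n : nat) (p : 'rV[R]_n -> R) : Prop :=
  exists (m : nat) (U : 'I_m -> set 'rV[R]_n),
    (forall i, closed (U i)) /\
    (\bigcup_(i in [set: 'I_m]) U i = [set: 'rV[R]_n]) /\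
    (forall i, affine_on p (U i)).

Definition cc_affine_cover (R : realType) (n : nat) (p : 'rV[R]_n -> R)
  (m : nat) (X : 'I_m -> set 'rV[R]_n) : Prop :=
  (forall i, closed (X i)) /\
  (forall i, connected (X i)) /\
  (\bigcup_(i in [set: 'I_m]) X i = [set: 'rV[R]_n]) /\
  (forall i, affine_on p (X i)).

(* An affine subspace of R^n of dimension n-1 : a translate x0 + V of a
   linear subspace V with dim V + 1 = n (so none exist when n = 0). *)
Definition affine_hyperplane (R : realType) (n : nat)
  (H : set 'rV[R]_n) : Prop :=
  exists (x0 : 'rV[R]_n) (V : {vspace 'rV[R]_n}),
    ((\dim V).+1 = n)%N /\ H = [set x | (x - x0) \in V].

(* Main.v *)
Require Import Defs.
From HB Require Import structures.
From mathcomp Require Import all_boot all_order all_algebra.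
From mathcomp Require Import all_classical all_reals all_analysis.
Import Order.TTheory GRing.Theory Num.Theory.
Import numFieldNormedType.Exports.
Local Open Scope ring_scope.
Local Open Scope classical_set_scope.

Lemma sum_cont (R : realType) (T : topologicalType) (I : Type) (s : seq I)
  (F : I -> T -> R) : (forall i, continuous (F i)) ->
  continuous (fun x => \sum_(i <- s) F i x).
Proof.
move=> Fc; elim: s => [|a s IH].
  under eq_fun do rewrite big_nil. exact: cst_continuous.
under eq_fun do rewrite big_cons.
by move=> x; apply: cvgD; [exact: Fc | exact: IH].
Qed.

Lemma lin_cont (R : realType) (n : nat) (c : 'rV[R]_n) :
  continuous (fun x : 'rV[R]_n => \sum_(i < n) c ord0 i * x ord0 i).
Proof.
apply: sum_cont => i x.
have h := @coord_continuous R 1 n ord0 i x. exact: (cvgMl_tmp h).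
Qed.

Lemma dense_avoid (T : topologicalType) (k : nat) (Z : nat -> set T) :
  (forall j, (j < k)%N -> closed (Z j) /\
     forall O, open O -> O !=set0 -> exists z, O z /\ ~ Z j z) ->
  forall O, open O -> O !=set0 ->
  exists z, O z /\ forall j, (j < k)%N -> ~ Z j z.
Proof.
elim: k => [|k IH] hZ O oO [y Oy].
  by exists y; split.
have [cZ hk] := hZ k (ltnSn k).
have [z [Oz nZz]] := hk O oO (ex_intro _ y Oy).
have hZ' : forall j, (j < k)%N -> closed (Z j) /\ forall O, open O -> O !=set0 -> exists z, O z /\ ~ Z j z.
  by move=> j jk; apply: hZ; exact: (leq_trans jk (leqnSn k)).
have := IH hZ' (O `&` ~` Z k).
case.
- by apply: openI => //; exact: closed_openC.
- by exists z.
move=> w [[Ow nZw] H]; exists w; split => // j; rewrite ltnS leq_eqVlt.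
by case/orP => [/eqP -> //|]; exact: H.
Qed.

Lemma hyp_avoid (R : realType) (n : nat) (x0 : 'rV[R]_n) (V : {vspace 'rV[R]_n}) :
  ((\dim V).+1 = n)%N ->
  exists Z : set 'rV[R]_n, [set x | (x - x0) \in V] `<=` Z /\ closed Z /\
    forall O, open O -> O !=set0 -> exists z, O z /\ ~ Z z.
Proof.
move=> hdim.
pose W := (V^C)%VS.
have dimW : \dim W = 1%N.
  rewrite /W dimv_compl dimvf dim_matrix mul1r; move: hdim; generalize (\dim V) => d hd; by rewrite -hd subSnn.
have W0 : W != 0%VS by rewrite -dimv_eq0 dimW.
pose w := vpick W.
have wnz : w != 0 by rewrite vpick0.
have wW : w \in W by exact: memv_pick.
pose pi := daddv_pi W V.
have piV : forall v, v \in V -> pi v = 0.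
  move=> v vV.
  have h1 := @daddv_pi_add _ _ V W v (capv_compl V).
  rewrite addv_complf memvf in h1.
  have h2 := h1 isT; rewrite daddv_pi_id ?capv_compl // in h2.
  by apply/eqP; rewrite -(addrI _ (etrans h2 (esym (addr0 v)))).
have piw : pi w = w by rewrite /pi daddv_pi_id // capvC capv_compl.
have [j wj] : exists j, w ord0 j != 0.
  apply/existsP; apply: contraNT wnz; rewrite negb_exists => /forallP h.
  by apply/eqP/rowP => k; rewrite mxE; apply/eqP; move: (h k); rewrite negbK.
pose g := fun x => pi x ord0 j.
pose c := \row_(i < n) g (delta_mx ord0 i).
have gE : forall x, g x = \sum_(i < n) c ord0 i * x ord0 i.
  move=> x; rewrite /g {1}(row_sum_delta x) linear_sum summxE.
  by apply: eq_bigr => i _; rewrite linearZ mxE /c mxE mulrC.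
pose h := fun x : 'rV[R]_n => \sum_(i < n) c ord0 i * x ord0 i - g x0.
have hE : forall x, h x = g (x - x0).
  by move=> x; rewrite /h -gE /g raddfB /= !mxE.
exists (h @^-1` [set r | r = 0]); split; [|split].
- by move=> x /= xV; rewrite hE /g piV // mxE.
- apply: preimage_closed; last exact: closed_eq.
  move=> x _; exact: (cvgB (@lin_cont _ _ c x) (cvg_cst _)).
move=> O oO [y Oy].
case: (eqVneq (h y) 0) => hy; last by exists y; split => //; apply/eqP.
have Oy' : nbhs y O by exact: oO.
have cphi : (fun t : R => y + t *: w) @ (0:R) --> y + 0 *: w.
  exact: (cvgD (cvg_cst y) (cvgZr_tmp (@cvg_id _ (nbhs (0:R))))).
rewrite scale0r addr0 in cphi.
have O1 : (0:R)^' [set t | O (y + t *: w)].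
  exact: (cvg_within_filter _ cphi Oy').
have PF := Proper_dnbhs_numFieldType (0:R).
have := @filter_ex _ _ PF _ (@filterI _ _ PF _ _ O1 (@nbhs_dnbhs_neq R 0)).
move=> [t [Ot tnz]].
exists (y + t *: w); split => //.
rewrite /= hE addrAC /g raddfD /= linearZ /= piw !mxE.
have := hy; rewrite hE /g => ->; rewrite add0r.
by apply/eqP; rewrite mulf_neq0.
Qed.

Theorem lemma13 (R : realType) (n : nat) (p : 'rV[R]_n -> R)
  (m : nat) (X : 'I_m -> set 'rV[R]_n) (k : nat) (H : 'I_k -> set 'rV[R]_n) :
  CPWL p ->
  cc_affine_cover p X ->
  (forall (m' : nat) (Y : 'I_m' -> set 'rV[R]_n),
      cc_affine_cover p Y -> (m <= m')%N) ->
  (forall j, affine_hyperplane (H j)) ->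
  forall i : 'I_m,
    X i `&` (~` \bigcup_(j in [set: 'I_k]) H j) !=set0.
Proof.
move=> _ [Xc [Xconn [Xcov Xaff]]] Hmin Hhyp i.
apply: contrapT => hne.
have hsub : forall x, X i x -> exists j, H j x.
  move=> x Xx; apply: contrapT => nH; apply: hne; exists x; split => //.
  by move=> [j _ Hj]; apply: nH; exists j.
have hZ : forall j : 'I_k, exists Z : set 'rV[R]_n, H j `<=` Z /\ closed Z /\
    forall O, open O -> O !=set0 -> exists z, O z /\ ~ Z z.
  move=> j; have [x0 [V [hd ->]]] := Hhyp j; exact: hyp_avoid.
have [Zf hZf] := choice hZ.
pose Zn := fun j : nat => match @insub nat (fun j => (j < k)%N) 'I_k j with
  Some o => Zf o | None => set0 end.
have ZnE : forall o : 'I_k, Zn o = Zf o by move=> o; rewrite /Zn valK.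
have dense : forall O, open O -> O !=set0 -> exists z, O z /\ forall j, ~ H j z.
  move=> O oO nO.
  have [|z [Oz hz]] := @dense_avoid _ k Zn _ O oO nO.
    move=> j jk; have -> : j = Ordinal jk by [].
    by rewrite ZnE; have [_ [? ?]] := hZf (Ordinal jk).
  exists z; split => // j Hj; apply: (hz j (ltn_ord j)).
  by rewrite ZnE; have [s _] := hZf j; exact: s.
clear hne; revert X Xc Xconn Xcov Xaff Hmin i hsub.
case: m => [|m'] X Xc Xconn Xcov Xaff Hmin i hsub.
  by move: i hsub => [] [].
pose Y := fun l : 'I_m' => X (lift i l).
have : cc_affine_cover p Y.
  split; [by move=> l; exact: (Xc (lift i l))|split; [by move=> l; exact: (Xconn (lift i l))|split]];
    last by move=> l; exact: (Xaff (lift i l)).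
  apply/seteqP; split => // x _.
  apply: contrapT => nx.
  pose U := \bigcup_(l in [set: 'I_m']) Y l.
  have cU : closed U by apply: closed_bigcup; [exact: finite_finset|] => l _; exact: Xc.
  have [z [Uz Hz]] := dense (~` U) (closed_openC cU) (ex_intro _ x nx).
  have : [set: 'rV[R]_n] z by [].
  rewrite -Xcov => -[l0 _ Xz].
  case: (unliftP i l0) => [l|] El0; rewrite El0 in Xz.
    by apply: Uz; exists l.
  by have [j Hj] := hsub z Xz; exact: (Hz j).
by move/Hmin; rewrite ltnn.
Qed.
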